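(* Let $X$ be a real normed space and $\mathcal M=\{M_1,\dots,M_n\}$ a finite family of nonempty compact convex subsets of $X$, with $\Sigma(\mathcal M)\neq\emptyset$ and $d=(d_1,\dots,d_n)\in\Omega(\mathcal M)$. Then for every $K\in\Sigma_d(\mathcal M)$ there exist $i$ and $x\in M_i$ with $U_{d_i}(x)\cap K=\emptyset$. In particular, some $M_i$ contains a point $x$ with $U_{d_i}(x)\cap K_d=\emptyset$ (a $d$-far point for $M_i$).
   Context: For $p\in X$ and $A\subset X$: $|p\,A|=\inf_{a\in A}|p\,a|$ ($=\infty$ if $A=\emptyset$); $B_r(A)=\{p:|p\,A|\le r\}$, $U_r(x)=\{p:|p\,x|<r\}$. For nonempty $A,B$, $d_H(A,B)=\max\{\sup_{a\in A}|a\,B|,\sup_{b\in B}|b\,A|\}$. Let $\mathcal P^f_{\mathrm{Cl}}(X)$ be the set of all nonempty closed $Y\subset X$ with $d_H(Y,M_1)<\infty$. $S_{\mathcal M}(Y)=\sum_i d_H(Y,M_i)$; $\Sigma(\mathcal M)$ is the set of minimizers of $S_{\mathcal M}$ over $\mathcal P^f_{\mathrm{Cl}}(X)$; for $K\in\Sigma(\mathcal M)$, $d(K)=(d_H(K,M_1),\dots,d_H(K,M_n))$; $\Omega(\mathcal M)=\{d(K):K\in\Sigma(\mathcal M)\}$; for $d\in\Omega(\mathcal M)$, $\Sigma_d(\mathcal M)=\{K\in\Sigma(\mathcal M):d(K)=d\}$ and $K_d=\bigcap_{i=1}^nB_{d_i}(M_i)$. *)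

(* Defs.v *)
From HB Require Import structures.
From mathcomp Require Import all_boot all_order all_algebra.
From mathcomp Require Import all_classical all_reals all_analysis.
Import Order.TTheory GRing.Theory Num.Theory.
Import numFieldNormedType.Exports.
Set Implicit Arguments. Unset Strict Implicit. Unset Printing Implicit Defensive.
Local Open Scope classical_set_scope.
Local Open Scope ring_scope.

Section Defs.
Variables (R : realType) (X : normedModType R).

Definition cvx (A : set X) : Prop :=
  forall x y (t : R), A x -> A y -> 0 <= t -> t <= 1 -> A (t *: x + (1 - t) *: y).

(* |p A| = inf_{a in A} |p - a|, = +oo when A is empty *)
Definition dpt (p : X) (A : set X) : \bar R :=
  ereal_inf [set (`|p - a|)%:E | a in A].

Definition Bset (r : R) (A : set X) : set X := [set p | (dpt p A <= r%:E)%E].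

Definition Uball (r : R) (x : X) : set X := [set p | `|p - x| < r].

Definition dH (A B : set X) : \bar R :=
  Order.max (ereal_sup [set dpt a B | a in A]) (ereal_sup [set dpt b A | b in B]).

Variable n : nat.
(* the family M_1, ..., M_{n+1}, indexed by 'I_n.+1; M_1 is M ord0 *)
Variable M : 'I_n.+1 -> set X.

Definition PfCl : set (set X) :=
  [set Y | Y !=set0 /\ closed Y /\ (dH Y (M ord0) < +oo)%E].

Definition SM (Y : set X) : \bar R := (\sum_(i < n.+1) dH Y (M i))%E.

Definition Sigma : set (set X) :=
  [set K | PfCl K /\ forall Y, PfCl Y -> (SM K <= SM Y)%E].

Definition dvec (K : set X) : 'I_n.+1 -> \bar R := fun i => dH K (M i).

Definition Omega : set ('I_n.+1 -> \bar R) := [set dvec K | K in Sigma].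

Definition Sigma_d (d : 'I_n.+1 -> \bar R) : set (set X) :=
  [set K | Sigma K /\ dvec K = d].

Definition Kd (d : 'I_n.+1 -> R) : set X :=
  \bigcap_(i in [set: 'I_n.+1]) Bset (d i) (M i).

End Defs.

(* Main.v *)
Require Import Defs.
From HB Require Import structures.
From mathcomp Require Import all_boot all_order all_algebra.
From mathcomp Require Import all_classical all_reals all_analysis.
From mathcomp Require Import ring lra.
Import Order.TTheory GRing.Theory Num.Theory.
Import numFieldNormedType.Exports.
Local Open Scope classical_set_scope.
Local Open Scope ring_scope.

Section H.
Variables (R : realType) (X : normedModType R).

Lemma dpt_le (p a : X) (A : set X) : A a -> (dpt p A <= (`|p - a|)%:E)%E.
Proof. by move=> Aa; apply: ereal_inf_lbound; exists a. Qed.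

Lemma dpt_leP (p : X) (A : set X) (r : R) :
  (dpt p A <= r%:E)%E <-> (forall e, 0 < e -> exists2 a, A a & `|p - a| < r + e).
Proof.
split.
- move=> h e e0.
  have : (dpt p A < (r + e)%:E)%E.
    by apply: (le_lt_trans h); rewrite lte_fin ltrDl.
  by move=> /ereal_inf_lt [_ [a Aa <-]]; rewrite lte_fin => ?; exists a.
- move=> h; apply/lee_addgt0Pr => e e0.
  have [a Aa ha] := h e e0.
  by apply: (le_trans (dpt_le p a A Aa)); rewrite -EFinD lee_fin ltW.
Qed.

Lemma dpt_cvx (A : set X) (k q : X) (a b t : R) : cvx A -> 0 <= t -> t <= 1 ->
  (dpt k A <= a%:E)%E -> (dpt q A <= b%:E)%E ->
  (dpt ((1 - t) *: k + t *: q)%R A <= ((1 - t) * a + t * b)%:E)%E.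
Proof.
move=> cA t0 t1 /dpt_leP hk /dpt_leP hq; apply/dpt_leP => e e0.
have e20 : 0 < e / 2 by rewrite divr_gt0.
have [m1 Am1 h1] := hk _ e20; have [m2 Am2 h2] := hq _ e20.
have t'0 : 0 <= 1 - t by rewrite subr_ge0.
have t'1 : 1 - t <= 1 by rewrite lerBlDr lerDl.
exists ((1 - t) *: m1 + (1 - (1 - t)) *: m2); first exact: cA.
rewrite (_ : 1 - (1 - t) = t); last by ring.
have -> : (1 - t) *: k + t *: q - ((1 - t) *: m1 + t *: m2)
   = (1 - t) *: (k - m1) + t *: (q - m2).
  by rewrite !scalerBr; rewrite opprD !addrA; congr (_ + _); rewrite addrAC.
apply: (le_lt_trans (ler_normD _ _)); rewrite !normrZ !ger0_norm //.
have : (1 - t) * `|k - m1| + t * `|q - m2| <= (1 - t) * (a + e / 2) + t * (b + e / 2).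
  by apply: lerD; apply: ler_wpM2l => //; apply: ltW.
move=> /le_lt_trans; apply.
have -> : (1 - t) * (a + e / 2) + t * (b + e / 2) = (1 - t) * a + t * b + e / 2.
  by ring.
by rewrite ltrD2l; lra.
Qed.

Lemma sum_lt (n : nat) (e : 'I_n.+1 -> \bar R) (d : 'I_n.+1 -> R) j (r : R) :
  0 < r -> (forall i, (e i <= (d i)%:E)%E) -> (e j <= (d j - r)%:E)%E ->
  (\sum_(i < n.+1) e i < (\sum_(i < n.+1) d i)%:E)%E.
Proof.
move=> r0 hle hj.
pose g i := if i == j then d j - r else d i.
apply: (@le_lt_trans _ _ (\sum_(i < n.+1) (g i)%:E)%E).
  apply: lee_sum => i _; rewrite /g; case: eqP => [->|] //.
rewrite sumEFin lte_fin (bigD1 j) //= [X in _ < X](bigD1 j) //= /g eqxx.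
have -> : \sum_(i < n.+1 | i != j) g i = \sum_(i < n.+1 | i != j) d i.
  by apply: eq_bigr => i /negbTE; rewrite /g => ->.
by rewrite ltrD2r ltrBlDr ltrDl.
Qed.
Lemma dH_leP (A B : set X) (r : R) :
  (dH A B <= r%:E)%E <-> ((forall a, A a -> (dpt a B <= r%:E)%E) /\
                          (forall b, B b -> (dpt b A <= r%:E)%E)).
Proof.
rewrite /dH ge_max; split.
- move=> /andP[h1 h2]; split => [a Aa|b Bb].
    by apply: le_trans h1; apply: ereal_sup_ubound; exists a.
  by apply: le_trans h2; apply: ereal_sup_ubound; exists b.
- move=> [h1 h2]; apply/andP; split; apply: ge_ereal_sup.
    by move=> _ [a Aa <-]; apply: h1.
  by move=> _ [b Bb <-]; apply: h2.
Qed.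

Lemma dpt_le_dH1 (A B : set X) a : A a -> (dpt a B <= dH A B)%E.
Proof. by move=> Aa; rewrite /dH le_max; apply/orP; left; apply: ereal_sup_ubound; exists a. Qed.
Lemma dpt_le_dH2 (A B : set X) b : B b -> (dpt b A <= dH A B)%E.
Proof. by move=> Bb; rewrite /dH le_max; apply/orP; right; apply: ereal_sup_ubound; exists b. Qed.

Lemma compact_mono_cover (A : set X) (f : nat -> set X) : compact A ->
  (forall m, open (f m)) -> (forall m m', (m <= m')%N -> f m `<=` f m') ->
  A `<=` \bigcup_m f m -> exists m, A `<=` f m.
Proof.
rewrite compact_cover => hA op mono cov.
have [D' _ cov'] := hA nat setT f (fun i _ => op i) cov.
exists (\max_(j <- finmap.enum_fset D') j) => x /cov' [j /= jD fj].
apply: mono fj; exact: leq_bigmax_seq.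
Qed.

Lemma slack (A K : set X) (r : R) : compact A ->
  (forall x, A x -> exists2 k, K k & `|k - x| < r) ->
  exists2 e, 0 < e & forall x, A x -> exists2 k, K k & `|x - k| <= r - e.
Proof.
move=> cA h.
pose f m := \bigcup_(k in K) ball k (r - m.+1%:R^-1).
have [|||m Am] := @compact_mono_cover A f cA.
- by move=> m; apply: bigcup_open => k _; apply: ball_open.
- move=> m m' le x [k Kk]; rewrite -ball_normE /ball_ /= => lt; exists k => //.
  rewrite -ball_normE /ball_ /=; apply: lt_le_trans lt _.
  by rewrite lerD2l lerN2 lef_pV2 ?posrE // ler_nat.
- move=> x /h [k Kk lt]; have [m hm] := ltr_add_invr lt.
  exists m => //; exists k => //; rewrite -ball_normE /ball_ /=.
  by rewrite ltrBrDr.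
- exists m.+1%:R^-1; first by rewrite invr_gt0 ltr0n.
  move=> x /Am [k Kk]; rewrite -ball_normE /ball_ /= => lt.
  by exists k => //; rewrite distrC ltW.
Qed.
Lemma slack2 (A K : set X) (r : R) : compact A ->
  (forall x, A x -> exists2 k, K k & `|k - x| < r) ->
  exists m : nat, forall m', (m <= m')%N ->
    forall x, A x -> exists2 k, K k & `|x - k| <= r - m'.+1%:R^-1.
Proof.
move=> cA h.
pose f m := \bigcup_(k in K) ball k (r - m.+1%:R^-1).
have mono : forall m m', (m <= m')%N -> f m `<=` f m'.
  move=> m m' le x [k Kk]; rewrite -ball_normE /ball_ /= => lt; exists k => //.
  rewrite -ball_normE /ball_ /=; apply: lt_le_trans lt _.
  by rewrite lerD2l lerN2 lef_pV2 ?posrE // ler_nat.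
have [|//||m Am] := @compact_mono_cover A f cA.
- by move=> m; apply: bigcup_open => k _; apply: ball_open.
- move=> x /h [k Kk lt]; have [m hm] := ltr_add_invr lt.
  exists m => //; exists k => //; rewrite -ball_normE /ball_ /=.
  by rewrite ltrBrDr.
- exists m => m' le x /Am /(mono _ _ le) [k Kk].
  rewrite -ball_normE /ball_ /= => lt.
  by exists k => //; rewrite distrC ltW.
Qed.

Lemma compact_normB (A : set X) : compact A -> exists B : R, forall x, A x -> `|x| <= B.
Proof.
move=> cA.
pose f (m : nat) := ball (0 : X) m%:R.
have [|||m Am] := @compact_mono_cover A f cA.
- by move=> m; apply: ball_open.
- by move=> m m' le; apply: le_ball; rewrite ler_nat.
- move=> x _; exists (Num.truncn `|x|).+1 => //.
  by rewrite /f -ball_normE /ball_ /= sub0r normrN truncnS_gt.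
- exists m%:R => x /Am; rewrite /f -ball_normE /ball_ /= sub0r normrN => /ltW //.
Qed.


Lemma part1 (n : nat) (M : 'I_n.+1 -> set X) (hcpt : forall i, compact (M i))
  (hcvx : forall i, cvx (M i)) (hne0 : M ord0 !=set0) (d : 'I_n.+1 -> R) K :
  Sigma M K -> (forall i, dH K (M i) = (d i)%:E) ->
  (forall i x, M i x -> exists2 k, K k & `|k - x| < d i) -> False.
Proof.
move=> [[K0 [clK _]] minK] dK far.
have sl : forall i, exists m : nat, forall m', (m <= m')%N ->
    forall x, M i x -> exists2 k, K k & `|x - k| <= d i - m'.+1%:R^-1.
  by move=> i; apply: slack2 => //; apply: far.
have [mf hmf] := choice sl.
pose m0 := (\max_i mf i)%N.
pose δ : R := m0.+1%:R^-1.
have hδ : 0 < δ by rewrite invr_gt0 ltr0n.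
have sl' : forall i x, M i x -> exists2 k, K k & `|x - k| <= d i - δ.
  by move=> i x Mx; apply: (hmf i m0 (leq_bigmax i) x Mx).
have [B hB] := compact_normB _ (hcpt ord0).
have Kb : forall k, K k -> `|k| <= d ord0 + 1 + B.
  move=> k Kk; have := dpt_le_dH1 K (M ord0) k Kk; rewrite dK.
  move=> /dpt_leP/(_ 1 ltr01) [x Mx hx].
  have := hB x Mx; rewrite -(subrK x k) => hxB.
  by apply: le_trans (ler_normD _ _) _; lra.
have [x0 Mx0] := hne0.
have [q Kq hq] := sl' ord0 x0 Mx0.
have dq0 : (dpt q (M ord0) <= (d ord0 - δ)%:E)%E.
  by apply: le_trans (dpt_le q x0 _ Mx0) _; rewrite lee_fin distrC.
pose Rb := 2 * (d ord0 + 1 + B).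
have hR : forall k, K k -> `|k - q| <= Rb.
  move=> k Kk; apply: le_trans (ler_normB _ _) _.
  by have := Kb k Kk; have := Kb q Kq; rewrite /Rb; lra.
have Rb0 : 0 <= Rb by have := hR q Kq; rewrite subrr normr0.
pose t := δ / (Rb + δ + 1).
have D0 : 0 < Rb + δ + 1 by lra.
have t0 : 0 < t by rewrite divr_gt0.
have tRd : t * (Rb + δ) <= δ.
  rewrite /t mulrAC ler_pdivrMr //; nra.
have t1 : t < 1.
  by rewrite /t ltr_pdivrMr // mul1r; lra.
have tR : t * Rb <= δ by nra.
pose g := fun p : X => (1 - t)^-1 *: (p - t *: q).
pose K' := [set p | K (g p)].
have ut : 1 - t != 0 by rewrite subr_eq0 eq_sym lt_eqF.
have gf : forall k, g ((1 - t) *: k + t *: q) = k.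
  by move=> k; rewrite /g addrK scalerA mulVf // scale1r.
have fg : forall p, (1 - t) *: g p + t *: q = p.
  by move=> p; rewrite /g scalerA mulfV // scale1r subrK.
have K'f : forall k, K k -> K' ((1 - t) *: k + t *: q).
  by move=> k Kk; rewrite /K' /= gf.
have clK' : closed K'.
  apply: preimage_closed => // x _.
  apply: (@continuousZ _ _ _ (cst ((1 - t)^-1)) (fun p => p - t *: q)).
    exact: cst_continuous.
  by apply: (@continuousB _ _ _ id (cst (t *: q))) => //; exact: cst_continuous.
have bound : forall i b, (dpt q (M i) <= b%:E)%E ->
    d i - δ + t * Rb <= (1 - t) * d i + t * b ->
    (dH K' (M i) <= ((1 - t) * d i + t * b)%:E)%E.
  move=> i b hqb hineq; apply/dH_leP; split.
  - move=> p K'p; rewrite -(fg p); apply: (dpt_cvx _ _ _ _ _ _ (hcvx i) (ltW t0) (ltW t1) _ hqb).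
    by rewrite -dK; apply: dpt_le_dH1.
  - move=> x Mx; have [k Kk hk] := sl' i x Mx.
    apply: le_trans (dpt_le x _ K' (K'f k Kk)) _; rewrite lee_fin.
    have -> : x - ((1 - t) *: k + t *: q) = (x - k) + t *: (k - q).
      by rewrite scalerBl scale1r scalerBr opprD opprB !addrA; congr (_ - _); rewrite addrAC.
    apply: le_trans (ler_normD _ _) _; rewrite normrZ (ger0_norm (ltW t0)).
    have := ler_wpM2l (ltW t0) (hR k Kk); lra.
have h1 : forall i, (dH K' (M i) <= (d i)%:E)%E.
  move=> i; have := bound i (d i).
  rewrite (_ : (1 - t) * d i + t * d i = d i); last by ring.
  apply; first by rewrite -dK; apply: dpt_le_dH1.
  lra.
have h0 : (dH K' (M ord0) <= (d ord0 - t * δ)%:E)%E.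
  have := bound ord0 (d ord0 - δ) dq0.
  rewrite (_ : (1 - t) * d ord0 + t * (d ord0 - δ) = d ord0 - t * δ); last by ring.
  apply; nra.
have PK' : PfCl M K'.
  split; first by exists ((1 - t) *: q + t *: q); apply: K'f.
  split => //; apply: le_lt_trans (h1 ord0) _; exact: ltry.
have := minK K' PK'.
have : (SM M K' < SM M K)%E.
  rewrite /SM (eq_bigr _ (fun i _ => dK i)) sumEFin.
  apply: (@sum_lt n (fun i => dH K' (M i)) d ord0 (t * δ)) => //.
  by rewrite mulr_gt0.
by move=> /lt_le_trans h /h; rewrite ltxx.
Qed.


Lemma Bset_closed (r : R) (A : set X) : closed (Bset r A).
Proof.
move=> p clp; rewrite /Bset /=; apply/dpt_leP => e e0.
have e20 : 0 < e / 2 by rewrite divr_gt0.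
have [p' [/dpt_leP hp' bp']] := clp _ (nbhsx_ballx p _ e20).
have [a Aa ha] := hp' _ e20.
exists a => //.
move: bp'; rewrite -ball_normE /ball_ /= => hpp.
have : `|p - a| <= `|p - p'| + `|p' - a|.
  by rewrite [X in `|X|](_ : _ = (p - p') + (p' - a)) ?ler_normD // addrA subrK.
lra.
Qed.
End H.
Arguments part1 {R X}.
Arguments dpt_le_dH1 {R X}.
Arguments dpt_le_dH2 {R X}.
Arguments dH_leP {R X}.
Arguments dpt_leP {R X}.
Arguments sum_lt {R}.
Arguments Bset_closed {R X}.

Theorem mainTheorem19 (R : realType) (X : normedModType R) (n : nat)
  (M : 'I_n.+1 -> set X)
  (hne : forall i, M i !=set0) (hcpt : forall i, compact (M i))
  (hcvx : forall i, cvx (M i))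
  (hSig : Sigma M !=set0)
  (d : 'I_n.+1 -> R) (hd : Omega M (fun i => (d i)%:E)) :
  (forall K, Sigma_d M (fun i => (d i)%:E) K ->
     exists i, exists2 x, M i x & Uball (d i) x `&` K = set0) /\
  (exists i, exists2 x, M i x & Uball (d i) x `&` Kd M d = set0).
Proof.
have partA : forall K, Sigma_d M (fun i => (d i)%:E) K ->
     exists i, exists2 x, M i x & Uball (d i) x `&` K = set0.
  move=> K [SK dK'].
  have dK : forall i, dH K (M i) = (d i)%:E.
    by move=> i; have := congr1 (fun f => f i) dK'.
  apply: contrapT => nh; apply: (part1 n M hcpt hcvx (hne ord0) d K SK dK).
  move=> i x Mx; apply: contrapT => nk; apply: nh; exists i; exists x => //.
  apply/seteqP; split => // k [hk Kk]; apply: nk; exists k => //.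
split => //.
have [K SK dK'] := hd.
have dK : forall i, dH K (M i) = (d i)%:E.
  by move=> i; have := congr1 (fun f => f i) dK'.
have KKd : K `<=` Kd M d.
  by move=> k Kk i _; rewrite /Bset /= -dK; apply: dpt_le_dH1.
have clKd : closed (Kd M d).
  by apply: closed_bigI => i _; apply: Bset_closed.
have dHKd : forall i, (dH (Kd M d) (M i) <= (d i)%:E)%E.
  move=> i; apply/dH_leP; split; first by move=> p Kdp; apply: (Kdp i).
  move=> x Mx; have := dpt_le_dH2 K (M i) x Mx; rewrite dK.
  move=> /dpt_leP hx; apply/dpt_leP => e e0.
  by have [a Ka ha] := hx e e0; exists a => //; apply: KKd.
have [[K0 _] minK] := SK.
have PKd : PfCl M (Kd M d).
  split; first by case: K0 => k Kk; exists k; apply: KKd.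
  by split => //; apply: le_lt_trans (dHKd ord0) _; exact: ltry.
have SMK : SM M K = (\sum_(i < n.+1) d i)%:E.
  by rewrite /SM (eq_bigr _ (fun i _ => dK i)) sumEFin.
have eqd : forall i, dH (Kd M d) (M i) = (d i)%:E.
  move=> j; apply: contrapT => ne.
  have lt : (dH (Kd M d) (M j) < (d j)%:E)%E.
    by rewrite lt_neqAle dHKd andbT; apply/eqP.
  have [r r0 hr] : exists2 r : R, 0 < r & (dH (Kd M d) (M j) <= (d j - r)%:E)%E.
    move: lt; case: (dH (Kd M d) (M j)) => [r'| |] //.
    + rewrite lte_fin => lt; exists (d j - r'); first by rewrite subr_gt0.
      by rewrite lee_fin opprB addrC subrK.
    + by move=> _; exists 1 => //; rewrite leNye.
  have := @sum_lt _ n (fun i => dH (Kd M d) (M i)) d j r r0 dHKd hr.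
  have := minK _ PKd; rewrite /SM -/(SM M K) SMK.
  by move=> h /(lt_le_trans) /(_ h); rewrite ltxx.
apply: partA; split.
  split => // Y PY.
  rewrite /SM (eq_bigr _ (fun i _ => eqd i)) sumEFin -SMK.
  exact: minK.
by apply: funext => i; rewrite /dvec eqd.
Qed.
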